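(* Let $\Phi:\mathbb{R}^n\to(-\infty,\infty]$ be a proper lower semicontinuous convex function which is strictly convex on $\operatorname{dom}\Phi$. Then there exists a lower semicontinuous convex function $\tilde\varphi:[0,\infty)\times\mathbb{R}^n\to(-\infty,\infty]$ such that $\tilde\varphi(0,y)=\Phi(y)$ for all $y$, $\tilde\varphi$ is real-valued on $(0,\infty)\times\mathbb{R}^n$, $x\mapsto\tilde\varphi(x,y)$ is decreasing for each $y$, $\lim_{x\to0+}\tilde\varphi(x,y)=\Phi(y)$ for each $y$, and moreover $\tilde\varphi$ is strictly convex on $(0,\infty)\times\mathbb{R}^n$.
   Context: A convex function $\Phi:\mathbb{R}^n\to(-\infty,\infty]$ is proper if it is not identically $+\infty$. $\operatorname{dom}\Phi:=\{y\in\mathbb{R}^n:\Phi(y)<\infty\}$. *)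

(* Defs.v *)
From HB Require Import structures.
From mathcomp Require Import all_boot all_order all_algebra.
From mathcomp Require Import all_classical all_reals all_analysis.
Set Implicit Arguments. Unset Strict Implicit. Unset Printing Implicit Defensive.
Import Order.TTheory GRing.Theory Num.Theory.
Import numFieldNormedType.Exports.
Local Open Scope classical_set_scope.
Local Open Scope ring_scope.

Definition no_minfty {T : Type} {R : realType} (f : T -> \bar R) :=
  forall x, f x <> -oo%E.

Definition proper_fun {T : Type} {R : realType} (f : T -> \bar R) :=
  no_minfty f /\ exists x, f x <> +oo%E.

Definition edom {T : Type} {R : realType} (f : T -> \bar R) : set T :=
  [set x | f x <> +oo%E].

Definition lsc_on {T : topologicalType} {R : realType}
  (D : set T) (f : T -> \bar R) :=
  forall p, D p -> forall a : R, (a%:E < f p)%E ->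
    \forall z \near p, D z -> (a%:E < f z)%E.

Definition convex_fun_on {R : realType} {V : lmodType R}
  (D : set V) (f : V -> \bar R) :=
  forall p q (t : R), D p -> D q -> 0 < t < 1 ->
    (f (t *: p + (1 - t) *: q)%R <= t%:E * f p + (1 - t)%R%:E * f q)%E.

Definition strictly_convex_fun_on {R : realType} {V : lmodType R}
  (D : set V) (f : V -> \bar R) :=
  forall p q (t : R), D p -> D q -> p <> q -> 0 < t < 1 ->
    (f (t *: p + (1 - t) *: q)%R < t%:E * f p + (1 - t)%R%:E * f q)%E.

(* Main.v *)
Require Import Defs.
From HB Require Import structures.
From mathcomp Require Import all_boot all_order all_algebra.
From mathcomp Require Import all_classical all_reals all_analysis.
From mathcomp Require Import ring lra.
Import Order.TTheory GRing.Theory Num.Theory.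
Import numFieldNormedType.Exports.
Local Open Scope classical_set_scope.
Local Open Scope ring_scope.

Set Implicit Arguments. Unset Strict Implicit. Unset Printing Implicit Defensive.

Lemma ereal_between {R : realType} (u v : \bar R) :
  u <> -oo%E -> (u < v)%E -> exists a : R, (u < a%:E)%E /\ (a%:E < v)%E.
Proof.
case: u => [r| |] // _; last by rewrite ltNge leey.
case: v => [s| |] //.
- move=> rs; exists ((r + s) / 2); rewrite !lte_fin in rs *.
  split; [rewrite ltr_pdivlMr //; lra | rewrite ltr_pdivrMr //; lra].
- move=> _; exists (r + 1); rewrite lte_fin ltey; split => //; lra.
Qed.

Lemma lsc_compact_min (T : topologicalType) (R : realType) (G : T -> \bar R)
  (K : set T) :
  compact K -> K !=set0 -> (forall z, G z <> -oo%E) ->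
  (forall p, K p -> forall a : R, (a%:E < G p)%E -> \forall z \near p, (a%:E < G z)%E) ->
  exists2 z, K z & forall w, K w -> (G z <= G w)%E.
Proof.
move=> cK [k0 Kk0] Gn lsc.
apply: contrapT => nomin.
have H : forall z, K z -> exists2 w, K w & (G w < G z)%E.
  move=> z Kz; apply: contrapT => nw; apply: nomin; exists z => // w Kw.
  rewrite leNgt; apply/negP => Gwz; apply: nw; by exists w.
pose B := fun z => K `&` [set w | (G w < G z)%E].
have FF : Filter (filter_from K B).
  apply: filter_from_filter; first by exists k0.
  move=> i j Ki Kj; case: (leP (G i) (G j)) => Hij.
  - exists i => //; move=> w [Kw Gw]; split; split => //; exact: lt_le_trans Gw Hij.
  - exists j => //; move=> w [Kw Gw]; split; split => //; exact: lt_trans Gw Hij.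
have PF : ProperFilter (filter_from K B).
  apply: filter_from_proper => // z Kz; have [w Kw Gw] := H z Kz; by exists w.
have FK : filter_from K B K by exists k0 => //; move=> w [].
have [p [Kp clp]] := cK _ PF FK.
have [w Kw Gwp] := H p Kp.
have [a [wa ap]] := @ereal_between _ _ _ (Gn w) Gwp.
have Bw : filter_from K B (B w) by exists w.
have [z [[_ Gzw] azl]] := clp _ _ Bw (lsc p Kp a ap).
have := lt_trans wa azl; rewrite /= in Gzw.
by rewrite ltNge (ltW Gzw).
Qed.


Section Qsec.
Variables (R : realType) (n : nat).
Definition Q (w : 'rV[R]_n) : R := \sum_i (w ord0 i) ^+ 2.

Lemma Q_ge0 w : 0 <= Q w.
Proof. by apply: sumr_ge0 => i _; exact: sqr_ge0. Qed.

Lemma Q_ge_norm w : `|w| ^+ 2 <= Q w.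
Proof.
have [/eqP w0|] := eqVneq (mx_norm w) 0.
  have -> : `|w| = 0 by exact/eqP.
  by rewrite expr0n /= Q_ge0.
move=> /mx_norm_neq0 [[i j] /= Hn].
have -> : `|w| = `|w i j| by rewrite -Hn.
have -> : i = ord0 by rewrite ord1.
rewrite /Q (bigD1 j) //= real_normK ?num_real // lerDl.
by apply: sumr_ge0 => k _; exact: sqr_ge0.
Qed.

Lemma QZ c w : Q (c *: w) = c ^+ 2 * Q w.
Proof. rewrite /Q mulr_sumr; apply: eq_bigr => i _; rewrite mxE; ring. Qed.

Lemma Q_comb (t : R) a b :
  t * Q a + (1 - t) * Q b - Q (t *: a + (1 - t) *: b) = t * (1 - t) * Q (a - b).
Proof.
rewrite /Q !mulr_sumr -big_split /= -sumrB; apply: eq_bigr => i _.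
rewrite !mxE; ring.
Qed.

Lemma Q_gt0 w : w != 0 -> 0 < Q w.
Proof.
move=> wn0; rewrite lt_neqAle Q_ge0 andbT; apply/negP => /eqP /esym.
move/eqP; rewrite psumr_eq0 => [/allP H|i _]; last exact: sqr_ge0.
move/negP: wn0; apply; apply/eqP/rowP => i; rewrite mxE.
have := H i (mem_index_enum _); rewrite /= sqrf_eq0 => /eqP.
by rewrite (ord1 ord0).
Qed.

Lemma Q_cont : continuous Q.
Proof.
rewrite /Q; apply: continuous_big.
  exact: add_continuous.
move=> i _ w.
exact: (@continuous_comp _ _ _ (fun w : 'rV[R]_n => w ord0 i) (fun x : R => x ^+ 2) w
  (@coord_continuous R 1 n ord0 i w) (@exprn_continuous R 2 _)).
Qed.

End Qsec.


Lemma persp1 (R : realType) (t x1 x2 a b : R) : 0 < t < 1 -> 0 <= x1 -> 0 <= x2 ->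
  (x1 = 0 -> a = 0) -> (x2 = 0 -> b = 0) -> 0 < t * x1 + (1 - t) * x2 ->
  (t * a + (1 - t) * b) ^+ 2 / (t * x1 + (1 - t) * x2) <=
  t * (a ^+ 2 / x1) + (1 - t) * (b ^+ 2 / x2).
Proof.
move=> /andP[t0 t1] x10 x20 h1 h2 xm.
have [x1e|x1p] := eqVneq x1 0.
  rewrite x1e (h1 x1e) !mulr0 !add0r in xm *.
  have x2q : 0 < x2 by nra.
  rewrite le_eqVlt; apply/orP; left; apply/eqP; rewrite expr0n /= mul0r mulr0 add0r; field.
  by apply/andP; split; rewrite lt0r_neq0 //; lra.
have [x2e|x2p] := eqVneq x2 0.
  rewrite x2e (h2 x2e) !mulr0 !addr0 in xm *.
  have x1q : 0 < x1 by nra.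
  rewrite le_eqVlt; apply/orP; left; apply/eqP; rewrite expr0n /= mul0r mulr0 addr0; field.
  by apply/andP; split; rewrite lt0r_neq0 //; lra.
have x1q : 0 < x1 by rewrite lt0r x1p.
have x2q : 0 < x2 by rewrite lt0r x2p.
rewrite -subr_ge0.
have -> : t * (a ^+ 2 / x1) + (1 - t) * (b ^+ 2 / x2) -
    (t * a + (1 - t) * b) ^+ 2 / (t * x1 + (1 - t) * x2) =
    t * (1 - t) * (a * x2 - b * x1) ^+ 2 / (x1 * x2 * (t * x1 + (1 - t) * x2)).
  field; rewrite !lt0r_neq0 //.
apply: divr_ge0; last by apply: mulr_ge0 => //; [apply: mulr_ge0|]; exact: ltW.
by apply: mulr_ge0; [apply: mulr_ge0; lra | exact: sqr_ge0].
Qed.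


Lemma Q_persp (R : realType) n (t x1 x2 : R) (a b : 'rV[R]_n) : 0 < t < 1 -> 0 <= x1 -> 0 <= x2 ->
  (x1 = 0 -> a = 0) -> (x2 = 0 -> b = 0) -> 0 < t * x1 + (1 - t) * x2 ->
  Q (t *: a + (1 - t) *: b) / (t * x1 + (1 - t) * x2) <=
  t * (Q a / x1) + (1 - t) * (Q b / x2).
Proof.
move=> t01 x10 x20 h1 h2 xm.
rewrite /Q !mulr_suml !mulr_sumr -big_split /=; apply: ler_sum => i _.
rewrite !mxE; apply: persp1 => //.
  by move=> /h1 ->; rewrite mxE.
by move=> /h2 ->; rewrite mxE.
Qed.

Lemma closed_ball_mem (R : realType) n (c z : 'rV[R]_n) (r : R) : 0 < r ->
  closed_ball c r z <-> `|z - c| <= r.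
Proof.
move=> r0; rewrite closed_ballE // /closed_ball_ /= distrC; done.
Qed.
Arguments closed_ball_mem {R n} c z r _.

Lemma closed_ball_compact (R : realType) n (c : 'rV[R]_n) (r : R) : 0 < r ->
  compact (closed_ball c r).
Proof.
move=> r0; apply: bounded_closed_compact; last exact: closed_ball_closed.
exists (`|c| + r); split; first exact: num_real.
move=> M HM z /(closed_ball_mem c z r r0) Hz.
have -> : z = c + (z - c) by rewrite addrC subrK.
apply: le_trans (ler_normD _ _) _; lra.
Qed.

Section Main.
Variables (R : realType) (n : nat) (Phi : 'rV[R]_n -> \bar R).
Hypotheses (Pp : proper_fun Phi) (Pl : lsc_on setT Phi)
  (Pc : convex_fun_on setT Phi) (Ps : strictly_convex_fun_on (edom Phi) Phi).

Lemma Pn z : Phi z <> -oo%E.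
Proof. by case: Pp. Qed.

Lemma LB : exists m beta z0, [/\ 0 <= beta, edom Phi z0 &
  forall z, ((m - beta * `|z - z0|)%:E <= Phi z)%E].
Proof.
case: Pp => _ [z0 Pz0].
have r0 : (0:R) < 1 by [].
have [zm Kzm Hzm] := @lsc_compact_min _ _ Phi _ (@closed_ball_compact _ _ z0 _ r0)
  (ex_intro _ z0 (@closed_ballxx R _ z0 1 r0)) Pn
  (fun p _ a H => filterS (fun z (h : setT z -> _) => h I) (Pl I H)).
have Hz0 := Hzm _ (@closed_ballxx R _ z0 1 r0).
have [m Em] : exists m : R, Phi zm = m%:E.
  move: Hz0 (@Pn zm); case: (Phi zm) => [s| |] // Hle _; first by exists s.
  by exfalso; apply: Pz0; apply/eqP; rewrite eq_le leey Hle.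
have [f0 Ef0] : exists f0 : R, Phi z0 = f0%:E.
  move: Pz0 (@Pn z0); case: (Phi z0) => [s| |] //; by exists s.
exists m, (f0 - m), z0; split => //.
  by move: Hz0; rewrite Em Ef0 lee_fin subr_ge0.
move=> z.
have [zin|zout] := leP (`|z - z0|) 1.
  apply: le_trans (Hzm z _); last by apply/(closed_ball_mem z0 z 1 r0).
  rewrite Em lee_fin gerBl; apply: mulr_ge0; last exact: normr_ge0.
  by move: Hz0; rewrite Em Ef0 lee_fin subr_ge0.
set r := `|z - z0| in zout *.
have rp : 0 < r by lra.
set t := r^-1.
have t01 : 0 < t < 1.
  by apply/andP; split; [rewrite invr_gt0 | rewrite invf_lt1].
have tr : t * r = 1 by rewrite mulVf // lt0r_neq0.
have Kw : closed_ball z0 1 (t *: z + (1 - t) *: z0).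
  apply/(closed_ball_mem z0 _ 1 r0).
  have -> : t *: z + (1 - t) *: z0 - z0 = t *: (z - z0).
    by apply/rowP => i; rewrite !mxE; ring.
  by rewrite normrZ gtr0_norm ?tr //; case/andP: t01.
have := le_trans (Hzm _ Kw) (Pc I I t01).
case Ez: (Phi z) => [s| |]; last by have := @Pn z; rewrite Ez.
  rewrite Em Ef0 -!EFinM -EFinD lee_fin => H.
  have hmf : m <= f0 by move: Hz0; rewrite Em Ef0 lee_fin.
  have H0 : 0 <= r * (t * s + (1 - t) * f0 - m) by apply: mulr_ge0; lra.
  have e : r * (t * s + (1 - t) * f0 - m) = s + (r - 1) * f0 - r * m.
    by rewrite /t; field; rewrite lt0r_neq0.
  rewrite e in H0; rewrite lee_fin; nra.
by rewrite leey.
Qed.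

End Main.


Lemma Q0 (R : realType) n : Q (0 : 'rV[R]_n) = 0.
Proof. by rewrite /Q big1 // => i _; rewrite mxE expr0n. Qed.

Lemma ldiv_anti (R : realType) (q x x' : R) : 0 <= q -> 0 < x -> x <= x' -> q / x' <= q / x.
Proof.
move=> q0 x0 xx'; apply: ler_wpM2l => //.
by rewrite lef_pV2 // posrE; lra.
Qed.

Section Env.
Variables (R : realType) (n : nat) (Phi : 'rV[R]_n -> \bar R).
Hypotheses (Pp : proper_fun Phi) (Pl : lsc_on setT Phi)
  (Pc : convex_fun_on setT Phi) (Ps : strictly_convex_fun_on (edom Phi) Phi).
Variables (m beta : R) (z0 : 'rV[R]_n).
Hypotheses (hb : 0 <= beta) (hz0 : edom Phi z0)
  (hlb : forall z, ((m - beta * `|z - z0|)%:E <= Phi z)%E).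

Definition g (x : R) (y z : 'rV[R]_n) := fine (Phi z) + Q (y - z) / x.
Definition S x y := [set g x y z | z in edom Phi].
Definition E x y := inf (S x y).

Lemma fineP z : edom Phi z -> Phi z = (fine (Phi z))%:E.
Proof. by move: (Pn Pp (z:=z)); rewrite /edom /=; case: (Phi z). Qed.

Lemma g_lb x y z : 0 < x -> edom Phi z ->
  m - beta * `|y - z0| - beta ^+ 2 * x / 4 <= g x y z.
Proof.
move=> x0 dz; rewrite /g.
have h1 := hlb z; rewrite (fineP dz) lee_fin in h1.
have h2 : `|z - z0| <= `|z - y| + `|y - z0| := ler_distD y z z0.
have h3 := Q_ge_norm (y - z).
rewrite [`|z - y|]distrC in h2.
set s := `|y - z| in h2 h3 *.
set c := `|y - z0| in h2 *.
have h4 : s ^+ 2 / x <= Q (y - z) / x by apply: ler_wpM2r => //; rewrite invr_ge0 ltW.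
have h5 : 0 <= (s - beta * x / 2) ^+ 2 / x by apply: divr_ge0; [exact: sqr_ge0 | exact: ltW].
have e : (s - beta * x / 2) ^+ 2 / x = s ^+ 2 / x - beta * s + beta ^+ 2 * x / 4.
  by field; rewrite lt0r_neq0.
rewrite e in h5.
have h6 : beta * `|z - z0| <= beta * (s + c) by apply: ler_wpM2l.
lra.
Qed.

Lemma S_has_inf x y : 0 < x -> has_inf (S x y).
Proof.
move=> x0; split; first by exists (g x y z0), z0.
exists (m - beta * `|y - z0| - beta ^+ 2 * x / 4) => _ [z dz <-].
exact: g_lb.
Qed.

Lemma E_le x y z : 0 < x -> edom Phi z -> E x y <= g x y z.
Proof. by move=> x0 dz; apply: (ge_inf (S_has_inf y x0).2); exists z. Qed.

Lemma E_ge x y c : 0 < x -> (forall z, edom Phi z -> c <= g x y z) -> c <= E x y.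
Proof.
move=> x0 H; apply: lb_le_inf; first by exists (g x y z0), z0.
by move=> _ [z dz <-]; exact: H.
Qed.

Lemma E_approx x y eps : 0 < x -> 0 < eps ->
  exists2 z, edom Phi z & g x y z < E x y + eps.
Proof.
move=> x0 e0; have [_ [z dz <-] H] := inf_adherent e0 (S_has_inf y x0).
by exists z.
Qed.

Lemma E_lb x y : 0 < x -> m - beta * `|y - z0| - beta ^+ 2 * x / 4 <= E x y.
Proof. by move=> x0; apply: E_ge => // z; exact: g_lb. Qed.

Lemma E_decr x x' y : 0 < x -> x <= x' -> E x' y <= E x y.
Proof.
move=> x0 xx'; apply: E_ge => // z dz.
apply: le_trans (E_le y _ dz) _; first lra.
by rewrite /g lerD2l; apply: ldiv_anti => //; exact: Q_ge0.
Qed.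

Lemma E_le_f x y : 0 < x -> edom Phi y -> E x y <= fine (Phi y).
Proof.
move=> x0 dy; apply: le_trans (E_le y x0 dy) _.
by rewrite /g subrr Q0 mul0r addr0.
Qed.

Lemma g0 y : g 0 y y = fine (Phi y).
Proof. by rewrite /g subrr Q0 mul0r addr0. Qed.

Lemma conv_dom t z1 z2 : 0 < t < 1 -> edom Phi z1 -> edom Phi z2 ->
  edom Phi (t *: z1 + (1 - t) *: z2) /\
  fine (Phi (t *: z1 + (1 - t) *: z2)) <= t * fine (Phi z1) + (1 - t) * fine (Phi z2).
Proof.
move=> t01 d1 d2; have := Pc (p:=z1) (q:=z2) I I t01.
rewrite (fineP d1) (fineP d2) -!EFinM -EFinD.
have := Pn Pp (z := t *: z1 + (1 - t) *: z2).
set zm := t *: z1 + (1 - t) *: z2.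
case Ez: (Phi zm) => [s| |] //=.
- by move=> _ H; split; [rewrite /edom /= Ez | rewrite lee_fin in H].
Qed.

Lemma E_conv t x1 x2 y1 y2 z1 z2 : 0 < t < 1 -> 0 <= x1 -> 0 <= x2 ->
  0 < t * x1 + (1 - t) * x2 -> edom Phi z1 -> edom Phi z2 ->
  (x1 = 0 -> z1 = y1) -> (x2 = 0 -> z2 = y2) ->
  E (t * x1 + (1 - t) * x2) (t *: y1 + (1 - t) *: y2) <=
  t * g x1 y1 z1 + (1 - t) * g x2 y2 z2.
Proof.
move=> t01 x10 x20 xm d1 d2 e1 e2.
have [dm fm] := conv_dom t01 d1 d2.
apply: le_trans (E_le _ xm dm) _.
rewrite /g.
have -> : t *: y1 + (1 - t) *: y2 - (t *: z1 + (1 - t) *: z2) =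
  t *: (y1 - z1) + (1 - t) *: (y2 - z2).
  by apply/rowP => i; rewrite !mxE; ring.
have a1 : x1 = 0 -> y1 - z1 = 0 by move=> h; rewrite (e1 h) subrr.
have a2 : x2 = 0 -> y2 - z2 = 0 by move=> h; rewrite (e2 h) subrr.
have := Q_persp t01 x10 x20 a1 a2 xm.
lra.
Qed.


Lemma g_lb2 x y z : 0 < x -> edom Phi z ->
  m - beta * `|y - z0| - beta * `|y - z| + `|y - z| ^+ 2 / x <= g x y z.
Proof.
move=> x0 dz; rewrite /g.
have h1 := hlb z; rewrite (fineP dz) lee_fin in h1.
have h2 : `|z - z0| <= `|z - y| + `|y - z0| := ler_distD y z z0.
have h3 := Q_ge_norm (y - z).
rewrite [`|z - y|]distrC in h2.
have h4 : `|y - z| ^+ 2 / x <= Q (y - z) / x.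
  by apply: ler_wpM2r => //; rewrite invr_ge0 ltW.
have h6 : beta * `|z - z0| <= beta * (`|y - z| + `|y - z0|) by apply: ler_wpM2l.
lra.
Qed.

Lemma far_bound (x s C : R) : 0 < x -> 1 + 2 * beta * x + 2 * x * `|C| < s ->
  C <= s ^+ 2 / x - beta * s.
Proof.
move=> x0 hs.
have hC : C <= `|C| := ler_norm C.
have hCp : 0 <= `|C| := normr_ge0 C.
have e : s ^+ 2 / x - beta * s = (s ^+ 2 - beta * s * x) / x by field; rewrite lt0r_neq0.
rewrite e ler_pdivlMr //.
have p1 : 0 <= beta * x by apply: mulr_ge0 => //; exact: ltW.
have p2 : 0 <= x * `|C| by apply: mulr_ge0 => //; exact: ltW.
have s1 : 1 <= s by lra.
have h1 : s * (s / 2) <= s * (s - beta * x).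
  by apply: ler_wpM2l; lra.
have h2 : s * 1 <= s * s by apply: ler_wpM2l; lra.
have p3 : x * C <= x * `|C| by apply: ler_wpM2l; lra.
rewrite expr2; lra.
Qed.

Lemma lscG x y p (a : R) : 0 < x ->
  (a%:E < Phi p + (Q (y - p) / x)%:E)%E ->
  \forall z \near p, (a%:E < Phi z + (Q (y - z) / x)%:E)%E.
Proof.
move=> x0 H.
have qc : (fun z => Q (y - z) / x) @ p --> Q (y - p) / x.
  have qc0 : (fun z => Q (y - z)) @ p --> Q (y - p).
    have hB : (fun z => y - z) @ p --> y - p.
      exact: (@cvgB _ _ _ (nbhs p) _ (fun=> y) (fun z => z) _ _ (cvg_cst _) cvg_id).
    by have := cvg_comp _ _ hB (@Q_cont R n (y - p)); exact.
  exact: (@cvgMr_tmp R _ (nbhs p) _ _ _ (x^-1) qc0).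
have q0 z : (0 <= Q (y - z) / x) by apply: divr_ge0; [exact: Q_ge0 | exact: ltW].
case Ep: (Phi p) => [r| |] in H.
- set eps := (r + Q (y - p) / x - a) / 2.
  have H' : a < r + Q (y - p) / x by rewrite -lte_fin EFinD.
  have ep : 0 < eps by rewrite /eps; lra.
  have Hr : ((r - eps)%:E < Phi p)%E by rewrite Ep lte_fin; lra.
  have H1 := Pl I Hr.
  have hlt : Q (y - p) / x - eps < Q (y - p) / x by lra.
  have H2 := @cvgr_gt R _ (nbhs p) (@nbhs_filter _ p) _ _ qc _ hlt.
  refine (filterS2 _ (fun z h1 h2 => _) H1 H2); move: h1 => /(_ I) h1.
  move: h1; case: (Phi z) => [s| |] //.
  + rewrite !lte_fin => h1; rewrite /= in h2; rewrite /eps in h1 h2; lra.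
  + by move=> _; rewrite addye // ltey.
- have Hr : (a%:E < Phi p)%E by rewrite Ep ltey.
  have H1 := Pl I Hr.
  refine (filterS (fun z h1 => _) H1); move: h1 => /(_ I) h1.
  by apply: lt_le_trans h1 _; apply: leeDl; rewrite lee_fin.
- by have := Pn Pp (z := p); rewrite Ep.
Qed.

Lemma E_min x y : 0 < x -> exists2 z, edom Phi z & g x y z = E x y.
Proof.
move=> x0.
have [zb dzb Hzb] := E_approx y x0 ltr01.
set C := E x y + 1 - m + beta * `|y - z0|.
set rho := 1 + 2 * beta * x + 2 * x * `|C|.
have rho0 : 0 < rho.
  have p1 : 0 <= beta * x by apply: mulr_ge0 => //; exact: ltW.
  have p2 : 0 <= x * `|C| by apply: mulr_ge0 => //; exact: ltW.
  rewrite /rho; lra.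
have far z : edom Phi z -> rho < `|y - z| -> E x y + 1 <= g x y z.
  move=> dz hz; have := g_lb2 y x0 dz; have := far_bound x0 hz.
  rewrite /C; lra.
pose G z := (Phi z + (Q (y - z) / x)%:E)%E.
have Gn z : G z <> -oo%E.
  rewrite /G; have := Pn Pp (z := z); case: (Phi z) => //.
have Gg z : edom Phi z -> G z = (g x y z)%:E by move=> dz; rewrite /G (fineP dz) -EFinD.
have [zs Kzs Hzs] := @lsc_compact_min _ _ G _ (@closed_ball_compact _ _ y _ rho0)
  (ex_intro _ y (@closed_ballxx R _ y rho rho0)) Gn
  (fun p _ a H => lscG (y := y) (p := p) x0 H).
have Kzb : closed_ball y rho zb.
  apply/(closed_ball_mem y zb rho rho0); rewrite distrC; rewrite leNgt; apply/negP => hf.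
  by have := far _ dzb hf; lra.
have Hb := Hzs _ Kzb; rewrite (Gg _ dzb) in Hb.
have dzs : edom Phi zs.
  move: Hb; rewrite /G /edom /=; case: (Phi zs) => //.
have Hall z : edom Phi z -> g x y zs <= g x y z.
  move=> dz; have [hz|hz] := leP (`|y - z|) rho.
    have Kz : closed_ball y rho z by apply/(closed_ball_mem y z rho rho0); rewrite distrC.
    by have := Hzs _ Kz; rewrite (Gg _ dz) (Gg _ dzs) lee_fin.
  have := far _ dz hz; rewrite (Gg _ dzs) lee_fin in Hb; lra.
exists zs => //; apply/le_anti/andP; split; last exact: E_le.
exact: E_ge.
Qed.

Lemma E_strict x y1 y2 t : 0 < x -> y1 <> y2 -> 0 < t < 1 ->
  E x (t *: y1 + (1 - t) *: y2) < t * E x y1 + (1 - t) * E x y2.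
Proof.
move=> x0 yn t01.
have [z1 d1 <-] := E_min y1 x0.
have [z2 d2 <-] := E_min y2 x0.
have [dm fm] := conv_dom t01 d1 d2.
apply: le_lt_trans (E_le _ x0 dm) _.
rewrite /g.
have -> : t *: y1 + (1 - t) *: y2 - (t *: z1 + (1 - t) *: z2) =
  t *: (y1 - z1) + (1 - t) *: (y2 - z2).
  by apply/rowP => i; rewrite !mxE; ring.
have Qc := Q_comb t (y1 - z1) (y2 - z2).
have tt : 0 < t * (1 - t) by case/andP: t01 => ? ?; nra.
have ix : 0 < x^-1 by rewrite invr_gt0.
have [ez|nz] := eqVneq z1 z2.
  have nw : y1 - z1 - (y2 - z2) != 0.
    rewrite ez; apply/negP => /eqP h; apply: yn.
    by apply/eqP; rewrite -subr_eq0; move/eqP: h; rewrite opprB addrA subrK.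
  have Qp := Q_gt0 nw.
  set D := Q (t *: (y1 - z1) + (1 - t) *: (y2 - z2)).
  have hD : D < t * Q (y1 - z1) + (1 - t) * Q (y2 - z2).
    have := mulr_gt0 tt Qp; rewrite -Qc /D; lra.
  have hD' : D / x < (t * Q (y1 - z1) + (1 - t) * Q (y2 - z2)) / x.
    by rewrite ltr_pM2r.
  move: hD'; rewrite mulrDl -!mulrA; lra.
have hs := Ps d1 d2 (fun h => (negP nz) (introT eqP h)) t01.
rewrite (fineP dm) (fineP d1) (fineP d2) -!EFinM -EFinD lte_fin in hs.
set D := Q (t *: (y1 - z1) + (1 - t) *: (y2 - z2)).
have hD : D <= t * Q (y1 - z1) + (1 - t) * Q (y2 - z2).
  have := mulr_ge0 (ltW tt) (Q_ge0 (y1 - z1 - (y2 - z2))); rewrite -Qc /D; lra.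
have hD' : D / x <= (t * Q (y1 - z1) + (1 - t) * Q (y2 - z2)) / x.
  by rewrite ler_pM2r.
move: hD'; rewrite mulrDl -!mulrA; lra.
Qed.

End Env.


Definition hh (R : realType) (x : R) := - (x / (1 + x)).

Lemma hh0 (R : realType) : hh (0 : R) = 0.
Proof. by rewrite /hh mul0r oppr0. Qed.

Lemma hh_conv (R : realType) (t a b : R) : 0 < t < 1 -> 0 <= a -> 0 <= b ->
  hh (t * a + (1 - t) * b) <= t * hh a + (1 - t) * hh b /\
  (a != b -> hh (t * a + (1 - t) * b) < t * hh a + (1 - t) * hh b).
Proof.
move=> /andP[t0 t1] a0 b0.
have m0 : 0 <= t * a + (1 - t) * b by nra.
have e : t * hh a + (1 - t) * hh b - hh (t * a + (1 - t) * b) =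
  t * (1 - t) * (a - b) ^+ 2 / ((1 + a) * (1 + b) * (1 + (t * a + (1 - t) * b))).
  rewrite /hh; field.
  by rewrite !lt0r_neq0 //; lra.
have dp : 0 < (1 + a) * (1 + b) * (1 + (t * a + (1 - t) * b)).
  by apply: mulr_gt0; [apply: mulr_gt0|]; lra.
have tt : 0 < t * (1 - t) by nra.
split.
  rewrite -subr_ge0 e; apply: divr_ge0; last exact: ltW.
  by apply: mulr_ge0; [exact: ltW | exact: sqr_ge0].
move=> ab; rewrite -subr_gt0 e; apply: divr_gt0 => //.
apply: mulr_gt0 => //; rewrite lt_neqAle sqr_ge0 andbT eq_sym sqrf_eq0 subr_eq0. exact: ab.
Qed.

Lemma hh_decr (R : realType) (x x' : R) : 0 <= x -> x <= x' -> hh x' <= hh x.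
Proof.
move=> x0 xx'; rewrite /hh lerN2.
rewrite ler_pdivrMr; last lra.
rewrite mulrAC ler_pdivlMr; last lra.
nra.
Qed.

Lemma hh_le0 (R : realType) (x : R) : 0 <= x -> hh x <= 0.
Proof. by move=> x0; rewrite -hh0; apply: hh_decr. Qed.

Lemma hh_ge (R : realType) (x : R) : 0 <= x -> - x <= hh x.
Proof.
move=> x0; rewrite /hh lerN2 ler_pdivrMr; last lra.
nra.
Qed.

Lemma hh_lip (R : realType) (x x' : R) : 0 <= x -> 0 <= x' -> hh x - `|x' - x| <= hh x'.
Proof.
move=> x0 x'0.
have e : hh x - hh x' = (x' - x) / ((1 + x) * (1 + x')).
  by rewrite /hh; field; rewrite !lt0r_neq0 //; lra.
have d1 : 1 <= (1 + x) * (1 + x') by nra.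
have h1 : (x' - x) / ((1 + x) * (1 + x')) <= `|x' - x|.
  apply: le_trans (ler_norm _) _.
  rewrite normrM normfV (ger0_norm (ltW (lt_le_trans ltr01 d1))).
  rewrite ler_pdivrMr; last exact: (lt_le_trans ltr01 d1).
  by apply: ler_peMr => //; exact: normr_ge0.
lra.
Qed.

Lemma Q_young (R : realType) n (w d : 'rV[R]_n) (eta : R) : 0 < eta ->
  (1 - eta) * Q w - Q d / eta <= Q (w + d).
Proof.
move=> e0; rewrite /Q mulr_sumr mulr_suml -sumrB; apply: ler_sum => i _.
rewrite !mxE -subr_ge0.
set a := w ord0 i; set b := d ord0 i.
have -> : (a + b) ^+ 2 - ((1 - eta) * a ^+ 2 - b ^+ 2 / eta) =
  (eta * a + b) ^+ 2 / eta + b ^+ 2.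
  by field; rewrite lt0r_neq0.
apply: addr_ge0; last exact: sqr_ge0.
by apply: divr_ge0; [exact: sqr_ge0 | exact: ltW].
Qed.

Lemma nbhsR (R : realType) (x r : R) (P : set R) : 0 < r ->
  (forall x', `|x - x'| < r -> P x') -> nbhs x P.
Proof.
move=> r0 H; apply/nbhs_ballP; exists r => // x' hx'; apply: H; move: hx'; rewrite -ball_normE /ball_ /=; done.
Qed.

Lemma nbhsV (R : realType) n (y : 'rV[R]_n) (r : R) (P : set 'rV[R]_n) : 0 < r ->
  (forall y', `|y - y'| < r -> P y') -> nbhs y P.
Proof.
move=> r0 H; apply/nbhs_ballP; exists r => // y' hy'; apply: H.
by move: hy'; rewrite -ball_normE /ball_.
Qed.

Lemma nbhsV_ball (R : realType) n (y : 'rV[R]_n) (P : set 'rV[R]_n) :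
  nbhs y P -> exists2 r, 0 < r & forall y', `|y - y'| < r -> P y'.
Proof.
move=> /nbhs_ballP [r r0 H]; exists r => // y' hy'; apply: H.
by rewrite -ball_normE /ball_.
Qed.

Lemma nbhs_pair (T U : topologicalType) (p : T * U) (A : set T) (B : set U)
  (P : set (T * U)) : nbhs p.1 A -> nbhs p.2 B ->
  (forall a b, A a -> B b -> P (a, b)) -> nbhs p P.
Proof.
move=> hA hB H; exists (A, B) => //= -[a b] [/= ha hb]; exact: H.
Qed.

Section Fin.
Variables (R : realType) (n : nat) (Phi : 'rV[R]_n -> \bar R).
Hypotheses (Pp : proper_fun Phi) (Pl : lsc_on setT Phi)
  (Pc : convex_fun_on setT Phi) (Ps : strictly_convex_fun_on (edom Phi) Phi).
Variables (m beta : R) (z0 : 'rV[R]_n).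
Hypotheses (hb : 0 <= beta) (hz0 : edom Phi z0)
  (hlb : forall z, ((m - beta * `|z - z0|)%:E <= Phi z)%E).

Let Ele := E_le Pp hb hz0 hlb.
Let Ege := E_ge hz0.
Let Eap := E_approx Pp hb hz0 hlb.
Let Edec := E_decr Pp hb hz0 hlb.
Let Elef := E_le_f Pp hb hz0 hlb.
Let Estr := E_strict Pp Pl Pc Ps hb hz0 hlb.
Let Econv := E_conv Pp Pc hb hz0 hlb.
Let gl2 := g_lb2 Pp hb hlb.
Let fP := fineP Pp.

Definition V x y := if 0 < x then E Phi x y else fine (Phi y).
Definition phi0 (p : R * 'rV[R]_n) : \bar R :=
  if 0 < p.1 then (E Phi p.1 p.2 + hh p.1)%:E else Phi p.2.

Lemma E_convV t x1 x2 y1 y2 : 0 < t < 1 -> 0 <= x1 -> 0 <= x2 ->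
  0 < t * x1 + (1 - t) * x2 -> (x1 = 0 -> edom Phi y1) -> (x2 = 0 -> edom Phi y2) ->
  E Phi (t * x1 + (1 - t) * x2) (t *: y1 + (1 - t) *: y2) <=
  t * V x1 y1 + (1 - t) * V x2 y2.
Proof.
move=> t01 x10 x20 xm h1 h2; apply/ler_addgt0Pr => e e0.
have pick x y : 0 <= x -> (x = 0 -> edom Phi y) ->
    exists2 z, edom Phi z /\ (x = 0 -> z = y) & g Phi x y z <= V x y + e.
  move=> x0 hx; rewrite /V; case: ifP => xp.
    have [z dz hz] := Eap y xp e0; exists z; last exact: ltW.
    by split => // h; rewrite h ltxx in xp.
  have x00 : x = 0 by apply/eqP; rewrite eq_le x0 andbT leNgt xp.
  exists y; first by split => //; exact: hx.
  by rewrite x00 g0; lra.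
have [z1 [d1 e1] g1] := pick _ _ x10 h1.
have [z2 [d2 e2] g2] := pick _ _ x20 h2.
have := Econv t01 x10 x20 xm d1 d2 e1 e2.
case/andP: t01 => t0 t1.
have k1 : t * g Phi x1 y1 z1 <= t * (V x1 y1 + e) by apply: ler_wpM2l => //; exact: ltW.
have k2 : (1 - t) * g Phi x2 y2 z2 <= (1 - t) * (V x2 y2 + e).
  by apply: ler_wpM2l => //; lra.
lra.
Qed.

Lemma phiV p : 0 <= p.1 -> (p.1 = 0 -> edom Phi p.2) ->
  phi0 p = (V p.1 p.2 + hh p.1)%:E.
Proof.
move=> p0 hp; rewrite /phi0 /V; case: ifP => // xp.
have x0 : p.1 = 0 by apply/eqP; rewrite eq_le p0 andbT leNgt xp.
by rewrite x0 hh0 addr0 -fP //; exact: hp.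
Qed.

Lemma phi0_nNy p : 0 <= p.1 -> phi0 p <> -oo%E.
Proof. by move=> _; rewrite /phi0; case: ifP => // _; exact: Pn. Qed.

Lemma phi_conv : convex_fun_on [set p : R * 'rV[R]_n | 0 <= p.1] phi0.
Proof.
move=> p q t /= hp hq t01.
have c1 : (t *: p + (1 - t) *: q).1 = t * p.1 + (1 - t) * q.1 by [].
have c2 : (t *: p + (1 - t) *: q).2 = t *: p.2 + (1 - t) *: q.2 by [].
case/andP: (t01) => t0 t1.
have [xm|xm] := ltP 0 (t * p.1 + (1 - t) * q.1).
  have [Hp|Hp] := pselect (p.1 = 0 -> edom Phi p.2); last first.
    have [p1 dp] : p.1 = 0 /\ Phi p.2 = +oo%E.
      apply: contrapT => H; apply: Hp => h; rewrite /edom /= => e; apply: H; by [].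
    have -> : phi0 p = +oo%E by rewrite /phi0 p1 ltxx.
    rewrite gt0_muley ?lte_fin // addye ?leey //.
    have := phi0_nNy hq; case: (phi0 q) => [r| |] //= _.
    by rewrite gt0_muley // lte_fin; lra.
  have [Hq|Hq] := pselect (q.1 = 0 -> edom Phi q.2); last first.
    have [q1 dq] : q.1 = 0 /\ Phi q.2 = +oo%E.
      apply: contrapT => H; apply: Hq => h; rewrite /edom /= => e; apply: H; by [].
    have -> : phi0 q = +oo%E by rewrite /phi0 q1 ltxx.
    rewrite (@gt0_muley _ (1 - t)%:E) ?lte_fin; last lra.
    rewrite addey ?leey //.
    have := phi0_nNy hp; case: (phi0 p) => [r| |] //= _.
    by rewrite gt0_muley // lte_fin.
  rewrite (phiV hp Hp) (phiV hq Hq) /phi0 c1 c2 xm -!EFinM -EFinD lee_fin.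
  have := E_convV t01 hp hq xm Hp Hq.
  have := (hh_conv t01 hp hq).1.
  lra.
have p10 : p.1 = 0 by nra.
have q10 : q.1 = 0 by nra.
rewrite /phi0 c1 c2 p10 q10 ltxx !mulr0 addr0 ltxx.
exact: Pc.
Qed.

Lemma phi_strict : strictly_convex_fun_on [set p : R * 'rV[R]_n | 0 < p.1] phi0.
Proof.
move=> p q t /= hp hq pq t01.
have c1 : (t *: p + (1 - t) *: q).1 = t * p.1 + (1 - t) * q.1 by [].
have c2 : (t *: p + (1 - t) *: q).2 = t *: p.2 + (1 - t) *: q.2 by [].
case/andP: (t01) => t0 t1.
have xm : 0 < t * p.1 + (1 - t) * q.1 by nra.
rewrite /phi0 c1 c2 xm hp hq -!EFinM -EFinD lte_fin.
have [e1|n1] := eqVneq p.1 q.1.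
  have n2 : p.2 <> q.2.
    by move=> e2; apply: pq; rewrite [LHS]surjective_pairing [RHS]surjective_pairing e1 e2.
  have ex : t * p.1 + (1 - t) * q.1 = p.1 by rewrite -e1; ring.
  rewrite ex.
  have := Estr (y1 := p.2) (y2 := q.2) hp n2 t01.
  rewrite -e1; lra.
have hV := E_convV t01 (ltW hp) (ltW hq) xm (fun h => False_ind _ (negP (lt0r_neq0 hp) (introT eqP h)))
  (fun h => False_ind _ (negP (lt0r_neq0 hq) (introT eqP h))).
rewrite /V hp hq in hV; move: (hV p.2 q.2) => {}hV.
have := (hh_conv t01 (ltW hp) (ltW hq)).2 n1.
lra.
Qed.


Lemma phi_decr y x x' : 0 <= x -> x <= x' -> (phi0 (x', y) <= phi0 (x, y))%E.
Proof.
move=> x0 xx'.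
have [xp|xn] := ltP 0 x.
  have x'p : 0 < x' by apply: lt_le_trans xp xx'.
  rewrite /phi0 /= xp x'p lee_fin.
  have := Edec y xp xx'; have := hh_decr (ltW xp) xx'; lra.
have x00 : x = 0 by apply/le_anti/andP.
rewrite /phi0 /= x00 ltxx; case: ifP => // x'p.
have := Pn Pp (z := y); case Ey: (Phi y) => [r| |] // _; last by rewrite leey.
have dy : edom Phi y by rewrite /edom /= Ey.
have := Elef x'p dy; rewrite Ey /= lee_fin.
have := hh_le0 (ltW x'p); lra.
Qed.

Lemma phi_fin x y : 0 < x -> phi0 (x, y) \is a fin_num.
Proof. by move=> x0; rewrite /phi0 /= x0. Qed.

Lemma bnd y (a : R) : (a%:E < Phi y)%E -> exists2 d, 0 < d & exists2 r, 0 < r &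
   (forall y', `|y - y'| < r -> (a%:E < Phi y')%E) /\
   (forall x' y', 0 < x' < d -> `|y - y'| < r -> a < E Phi x' y' + hh x').
Proof.
move=> ha.
have [a' [aa' a'P]] := @ereal_between _ (a%:E) _ (ltac:(by [])) ha.
rewrite lte_fin in aa'.
have [r0 r0p Hr0] := nbhsV_ball (Pl I a'P).
set r := r0 / 2.
have rp : 0 < r by rewrite /r divr_gt0.
have rr0 : r < r0 by rewrite /r; lra.
set C := a' - m + beta * (`|y - z0| + r).
set K := 2 * beta * r + 4 * `|C| + 1.
have Kp : 0 < K.
  have : 0 <= beta * r by apply: mulr_ge0 => //; exact: ltW.
  have := normr_ge0 C; rewrite /K; lra.
exists (Num.min (r ^+ 2 / K) ((a' - a) / 2)).
  by rewrite lt_min; apply/andP; split; apply: divr_gt0 => //; [exact: exprn_gt0 | lra].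
exists r => //; split.
  move=> y' hy'; apply: lt_trans (Hr0 y' (lt_trans hy' rr0) I).
  by rewrite lte_fin.
move=> x' y' /andP[x'p]; rewrite lt_min => /andP[hx1 hx2] hy'.
have hE : a' <= E Phi x' y'.
  apply: Ege => // z dz.
  have qn : 0 <= Q (y' - z) / x' by apply: divr_ge0; [exact: Q_ge0 | exact: ltW].
  have [hz|hz] := ltP (`|y - z|) r0.
    have := Hr0 z hz I; rewrite (fP dz) lte_fin /g; lra.
  have hs : r < `|y' - z|.
    have rr : r0 = 2 * r by rewrite /r; field.
    have := ler_distD y' y z; lra.
  set s := `|y' - z| in hs.
  have h1 := gl2 y' x'p dz.
  have h2 : `|y' - z0| <= `|y - z0| + r.
    have := ler_distD y y' z0; rewrite [`|y' - y|]distrC; lra.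
  have h3 : beta * `|y' - z0| <= beta * (`|y - z0| + r) by apply: ler_wpM2l.
  have hK : x' * K < r ^+ 2 by rewrite -ltr_pdivlMr.
  have hC : C <= `|C| := ler_norm C.
  have hCp : 0 <= `|C| := normr_ge0 C.
  have hb1 : beta * x' < r / 2.
    rewrite ltr_pdivlMr //; rewrite /K in hK.
    have : 0 <= x' * `|C| by apply: mulr_ge0 => //; exact: ltW.
    rewrite expr2 in hK; nra.
  have hb2 : 4 * (`|C| * x') < r ^+ 2.
    rewrite /K in hK; have : 0 <= beta * r * x' by apply: mulr_ge0; [apply: mulr_ge0 => //; exact: ltW | exact: ltW].
    nra.
  have hCx : C * x' <= `|C| * x' by apply: ler_wpM2r => //; exact: ltW.
  have h4 : r * (r - beta * x') <= s * (s - beta * x').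
    by apply: ler_pM; lra.
  have h5 : C <= s ^+ 2 / x' - beta * s.
    have e : s ^+ 2 / x' - beta * s = (s * (s - beta * x')) / x'.
      by field; rewrite lt0r_neq0.
    rewrite e ler_pdivlMr //.
    rewrite expr2 in hb2; nra.
  rewrite /C /s in h5; lra.
have := hh_ge (ltW x'p); lra.
Qed.


Lemma intr x y (a : R) : 0 < x -> a < E Phi x y + hh x ->
  exists2 d, 0 < d & exists2 r, 0 < r & forall x' y',
    `|x - x'| < d -> `|y - y'| < r -> 0 < x' /\ a < E Phi x' y' + hh x'.
Proof.
move=> x0 ha.
set eps := (E Phi x y + hh x - a) / 2.
have ep : 0 < eps by rewrite /eps; lra.
have x2 : 0 < x / 2 by rewrite divr_gt0.
set A := E Phi (x / 2) y.
set F2 := E Phi (2 * x) y.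
have AF : F2 <= A by apply: Edec => //; lra.
set kap := eps / (6 * (A - F2 + 1) + eps).
have den : 0 < 6 * (A - F2 + 1) + eps by lra.
have kp : 0 < kap by rewrite /kap divr_gt0.
have ke : kap * (6 * (A - F2 + 1) + eps) = eps by rewrite /kap; field; rewrite lt0r_neq0.
have k1 : kap < 1 by rewrite /kap ltr_pdivrMr // mul1r; lra.
set B := E Phi (x * (1 + kap)) y.
have xk : 0 < x * (1 + kap) by apply: mulr_gt0 => //; lra.
have BF : F2 <= B by apply: Edec => //; nra.
have stepA : E Phi x y - 2 * kap * (A - F2) <= B.
  set lam := 2 * kap / (2 * kap + 1).
  have lp : 0 < lam by rewrite /lam divr_gt0 //; lra.
  have l1 : lam < 1 by rewrite /lam ltr_pdivrMr; lra.
  have l2 : lam <= 2 * kap by rewrite /lam ler_pdivrMr; nra.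
  have l01 : 0 < lam < 1 by apply/andP.
  have hx : lam * (x / 2) + (1 - lam) * (x * (1 + kap)) = x.
    by rewrite /lam; field; lra.
  have hy : lam *: y + (1 - lam) *: y = y by rewrite -scalerDl subrKC scale1r.
  have := E_convV (y1 := y) (y2 := y) l01 (ltW x2) (ltW xk) (ltac:(rewrite hx //))
    (fun h => False_ind _ (negP (lt0r_neq0 x2) (introT eqP h)))
    (fun h => False_ind _ (negP (lt0r_neq0 xk) (introT eqP h))).
  rewrite hx hy /V x2 xk -/A -/B => H.
  have q1 : 0 <= lam * (B - F2) by apply: mulr_ge0; lra.
  have q2 : 0 <= (2 * kap - lam) * (A - F2) by apply: mulr_ge0; lra.
  nra.
have kD : 2 * kap * (A - F2) <= eps / 3.
  have : 0 <= kap * (A - F2) by apply: mulr_ge0; lra.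
  nra.
set eta := kap / 4.
have etap : 0 < eta by rewrite /eta divr_gt0.
set del := eps * eta * x / 6.
have delp : 0 < del by rewrite /del; apply: divr_gt0 => //; apply: mulr_gt0 => //; exact: mulr_gt0.
have qc : (fun y' => Q (y' - y)) @ y --> Q (y - y).
  have hB : (fun z => z - y) @ y --> y - y.
    exact: (@cvgB _ _ _ (nbhs y) _ (fun z => z) (fun=> y) _ _ cvg_id (cvg_cst _)).
  by have := cvg_comp _ _ hB (@Q_cont R n (y - y)); exact.
rewrite subrr Q0 in qc.
have [r rp Hr] := nbhsV_ball (@cvgr_lt R _ (nbhs y) (@nbhs_filter _ y) _ _ qc _ delp).
exists (Num.min (x / 2) (Num.min (kap * x / 2) (eps / 3))).
  rewrite !lt_min; apply/and3P; split => //; apply: divr_gt0 => //; exact: mulr_gt0.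
exists r => // x' y'; rewrite !lt_min => /and3P[d1 d2 d3] hy.
have hQ : Q (y' - y) < del := Hr y' hy.
have := ltr_distlC x x' (x / 2); rewrite d1 => /esym/andP[x'1 x'2].
have x'p : 0 < x' by lra.
split => //.
have := ltr_distlC x x' (kap * x / 2); rewrite d2 => /esym/andP[_ x'3].
set xh := x' / (1 - eta).
have e1 : 0 < 1 - eta by rewrite /eta; lra.
have xhp : 0 < xh by rewrite /xh divr_gt0.
have xhk : xh <= x * (1 + kap).
  rewrite /xh ler_pdivrMr //.
  have : 0 <= x * kap * (1 - kap) by apply: mulr_ge0; [apply: mulr_ge0|]; lra.
  rewrite /eta; nra.
have stepB : E Phi xh y - Q (y' - y) / (eta * x') <= E Phi x' y'.
  apply: Ege => // z dz.
  have hyz := Q_young (y - z) (y' - y) etap.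
  have h1 := Ele y xhp dz.
  move: h1; rewrite /g => h1.
  have h2 : ((1 - eta) * Q (y - z) - Q (y' - y) / eta) / x' <= Q (y' - z) / x'.
    rewrite ler_pM2r ?invr_gt0 //.
    have -> : y' - z = y - z + (y' - y) by apply/rowP => i; rewrite !mxE; ring.
    exact: hyz.
  have e2 : ((1 - eta) * Q (y - z) - Q (y' - y) / eta) / x' =
    Q (y - z) / xh - Q (y' - y) / (eta * x').
    by rewrite /xh; field; rewrite !lt0r_neq0.
  rewrite e2 in h2; lra.
have hEh := Edec y xhp xhk.
have hQb : Q (y' - y) / (eta * x') <= eps / 3.
  rewrite ler_pdivrMr; last exact: mulr_gt0.
  have : 0 <= eps * eta * (x' - x / 2) by apply: mulr_ge0; [apply: mulr_ge0|]; lra.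
  rewrite /del in hQ; nra.
have hh1 := hh_lip (ltW x0) (ltW x'p).
have d3' : `|x' - x| < eps / 3 by rewrite distrC.
rewrite /eps in ep kD hQb d3'.
have -> : a = E Phi x y + hh x - 2 * ((E Phi x y + hh x - a) / 2) by field.
lra.
Qed.


Lemma phi_lsc : lsc_on [set p : R * 'rV[R]_n | 0 <= p.1] phi0.
Proof.
move=> p /= hp a hpa.
have [xp|xn] := ltP 0 p.1.
  rewrite /phi0 xp lte_fin in hpa.
  have [d dp [r rp H]] := intr xp hpa.
  apply: (nbhs_pair (A := [set x' | `|p.1 - x'| < d]) (B := [set y' | `|p.2 - y'| < r])).
  - by apply: (nbhsR dp).
  - by apply: (nbhsV rp).
  move=> x' y' hx hy _; have [x'p h] := H x' y' hx hy.
  by rewrite /phi0 /= x'p lte_fin.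
have p0 : p.1 = 0 by apply/le_anti/andP.
rewrite /phi0 p0 ltxx in hpa.
have [d dp [r rp [H1 H2]]] := bnd hpa.
apply: (nbhs_pair (A := [set x' | `|p.1 - x'| < d]) (B := [set y' | `|p.2 - y'| < r])).
- by apply: (nbhsR dp).
- by apply: (nbhsV rp).
move=> x' y' hx hy /= hx'.
rewrite /phi0 /=; case: ifP => x'p; last exact: H1.
rewrite lte_fin; apply: H2 => //; apply/andP; split => //.
by move: hx => /=; rewrite p0 sub0r normrN gtr0_norm // x'p.
Qed.

Lemma phi_lim y : (fun x => phi0 (x, y)) @ 0^'+ --> Phi y.
Proof.
have := Pn Pp (z := y); case Ey: (Phi y) => [r| |] // _.
  apply/fine_cvgP; split.
    by apply: filterS (nbhs_right_gt 0) => x x0; rewrite /phi0 /= x0.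
  apply/cvgrPdist_lt => e e0.
  have he : ((r - e)%:E < Phi y)%E by rewrite Ey lte_fin; lra.
  have [d dp [r' r'p [_ H2]]] := bnd he.
  apply: filterS2 (nbhs_right_gt 0) (nbhs_right_lt dp) => x x0 xd.
  have h1 := H2 x y (ltac:(by apply/andP)) (ltac:(by rewrite subrr normr0)).
  have h2 := phi_decr y (le_refl 0) (ltW x0).
  rewrite /phi0 /= x0 ltxx Ey lee_fin in h2.
  rewrite /= /phi0 /= x0 /=.
  rewrite ltr_distlC; apply/andP; split; lra.
apply/cvgeyPge => A.
have he : (A%:E < Phi y)%E by rewrite Ey ltey.
have [d dp [r' r'p [_ H2]]] := bnd he.
apply: filterS2 (nbhs_right_gt 0) (nbhs_right_lt dp) => x x0 xd.
have h1 := H2 x y (ltac:(by apply/andP)) (ltac:(by rewrite subrr normr0)).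
by rewrite /phi0 /= x0 lee_fin ltW.
Qed.

End Fin.

Unset Implicit Arguments.

Theorem corollary2 (R : realType) (n : nat) (Phi : 'rV[R]_n -> \bar R) :
  proper_fun Phi ->
  lsc_on setT Phi ->
  convex_fun_on setT Phi ->
  strictly_convex_fun_on (edom Phi) Phi ->
  exists phi : R * 'rV[R]_n -> \bar R,
    [/\ (forall p, 0 <= p.1 -> phi p <> -oo%E),
        lsc_on [set p : R * 'rV[R]_n | 0 <= p.1] phi,
        convex_fun_on [set p : R * 'rV[R]_n | 0 <= p.1] phi,
        (forall y, phi (0, y) = Phi y) &
      [/\ (forall x y, 0 < x -> phi (x, y) \is a fin_num),
        (forall y x x', 0 <= x -> x <= x' -> (phi (x', y) <= phi (x, y))%E),
        (forall y, (fun x => phi (x, y)) @ at_right 0 --> Phi y)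
      & strictly_convex_fun_on [set p : R * 'rV[R]_n | 0 < p.1] phi]].
Proof.
move=> Pp Pl Pc Ps.
have [m [beta [z0 [hb hz0 hlb]]]] := LB Pp Pl Pc.
exists (phi0 Phi); split.
- by move=> p; exact: phi0_nNy.
- exact: (phi_lsc Pp Pl Pc hb hz0 hlb).
- exact: (phi_conv Pp Pc hb hz0 hlb).
- by move=> y; rewrite /phi0 /= ltxx.
split.
- by move=> x y x0; exact: phi_fin.
- by move=> y x x'; exact: (phi_decr Pp hb hz0 hlb).
- by move=> y; exact: (phi_lim Pp Pl hb hz0 hlb).
- exact: (phi_strict Pp Pl Pc Ps hb hz0 hlb).
Qed.
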